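(* For every fixed $r \ge 1$, the function $$s \mapsto \theta_4(rs)\,\theta_4\!\left(\frac{r}{s}\right) - 2\,\theta_o(rs)\,\theta_o\!\left(\frac{r}{s}\right), \qquad s>0,$$ attains its maximum at $s = 1$.
   Context: For $s>0$, $\theta_4(s) = \sum_{k\in\mathbb{Z}} (-1)^k e^{-\pi k^2 s}$ and $\theta_o(s) = \sum_{k\in\mathbb{Z}} e^{-\pi (2k+1)^2 s}$. *)

(* Defs.v *)
From Stdlib Require Import Reals Lra Lia ZArith ClassicalEpsilon.
Open Scope R_scope.

Definition zpartial (f : Z -> R) (N : nat) : R :=
  sum_f_R0 (fun n => f (Z.of_nat n - Z.of_nat N)%Z) (2 * N).

(* The sum over k in Z, defined as the limit of the symmetric partial sums
   (the limit is unique; all families used here are absolutely summable,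
   so this agrees with the unordered sum). *)
Definition zsum (f : Z -> R) : R :=
  epsilon (inhabits 0) (fun l => Un_cv (zpartial f) l).

Definition theta4 (s : R) : R :=
  zsum (fun k => powerRZ (-1) k * exp (- PI * IZR k ^ 2 * s)).

Definition thetao (s : R) : R :=
  zsum (fun k => exp (- PI * IZR (2 * k + 1) ^ 2 * s)).

Definition Fr (r s : R) : R :=
  theta4 (r * s) * theta4 (r / s) - 2 * thetao (r * s) * thetao (r / s).

(* Main.v *)
Require Import Defs.
From Stdlib Require Import Reals Lra Lia ZArith ClassicalEpsilon Psatz.
Open Scope R_scope.

Fixpoint sumN (h : nat -> R) (N : nat) : R :=
  match N with O => 0 | S M => sumN h M + h M end.

Lemma sumN_le (h k : nat -> R) N : (forall j, h j <= k j) -> sumN h N <= sumN k N.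
Proof. intros H; induction N; simpl; [lra| specialize (H N); lra]. Qed.

Lemma sumN_nonneg (h : nat -> R) N : (forall j, 0 <= h j) -> 0 <= sumN h N.
Proof. intros H; induction N; simpl; [lra| specialize (H N); lra]. Qed.

Lemma sumN_ext (h k : nat -> R) N : (forall j, h j = k j) -> sumN h N = sumN k N.
Proof. intros H; induction N; simpl; [lra| rewrite IHN, H; lra]. Qed.

Lemma sumN_plus (h k : nat -> R) N : sumN (fun j => h j + k j) N = sumN h N + sumN k N.
Proof. induction N; simpl; lra. Qed.

Lemma sumN_scal (c : R) (h : nat -> R) N : sumN (fun j => c * h j) N = c * sumN h N.
Proof. induction N; simpl; [lra| rewrite IHN; ring]. Qed.

Lemma sumN_geo (r : R) N : 0 <= r < 1 -> sumN (fun j => r ^ j) N <= / (1 - r).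
Proof.
  intros Hr. assert (H : forall N, sumN (fun j => r ^ j) N * (1 - r) = 1 - r ^ N).
  { induction N0; simpl; [ring|]. rewrite Rmult_plus_distr_r, IHN0. ring. }
  assert (0 < 1 - r) by lra.
  assert (0 <= r ^ N) by (apply pow_le; lra).
  apply Rmult_le_reg_r with (1 - r); auto.
  rewrite H, Rinv_l by lra. lra.
Qed.

Lemma pow_le_one (z : R) n : 0 <= z <= 1 -> z ^ n <= 1.
Proof.
  intros Hz; induction n; simpl; [lra|].
  assert (0 <= z ^ n) by (apply pow_le; lra). nra.
Qed.

Lemma pow_le1_mono (z : R) (a b : nat) : 0 <= z <= 1 -> (a <= b)%nat -> z ^ b <= z ^ a.
Proof.
  intros Hz Hab. replace b with (a + (b - a))%nat by lia. rewrite pow_add.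
  assert (0 <= z ^ a) by (apply pow_le; lra).
  assert (z ^ (b - a) <= 1) by (apply pow_le_one; lra). nra.
Qed.

Lemma exp_le (a b : R) : a <= b -> exp a <= exp b.
Proof. intros H; destruct (Rle_lt_or_eq_dec a b H); [left; apply exp_increasing; auto| subst; lra]. Qed.

Lemma exp_pow (c : R) (m : nat) : exp (INR m * c) = exp c ^ m.
Proof.
  induction m. { simpl. rewrite Rmult_0_l, exp_0; auto. }
  rewrite S_INR, Rmult_plus_distr_r, Rmult_1_l, exp_plus, IHm. simpl. ring.
Qed.

Lemma pow_diff_le (x y : R) n : 0 <= x <= y ->
  0 <= y ^ S n - x ^ S n <= INR (S n) * y ^ n * (y - x).
Proof.
  intros Hxy. induction n.
  - simpl. lra.
  - assert (Hyn : 0 <= y ^ n) by (apply pow_le; lra).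
    assert (Hxn : x ^ S n <= y ^ S n) by (apply pow_incr; lra).
    assert (0 <= x ^ S n) by (apply pow_le; lra).
    replace (y ^ S (S n) - x ^ S (S n)) with (y * (y ^ S n - x ^ S n) + x ^ S n * (y - x))
      by (simpl; ring).
    rewrite S_INR. destruct IHn as [I1 I2]. split.
    + assert (0 <= y) by lra. nra.
    + assert (y * (y ^ S n - x ^ S n) <= y * (INR (S n) * y ^ n * (y - x)))
        by (apply Rmult_le_compat_l; lra).
      assert (x ^ S n * (y - x) <= y ^ S n * (y - x)) by (apply Rmult_le_compat_r; lra).
      simpl in *. nra.
Qed.

Lemma mono_delta (x e y : R) n : 0 <= x <= e -> e <= y -> 0 <= x + y - 2 * e ->
  0 <= x ^ S n + y ^ S n - 2 * e ^ S n <=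
  INR (S n) * y ^ n * (x + y - 2 * e) + INR (S n) * INR n * y ^ (pred n) * ((e - x) * (y - e)).
Proof.
  intros Hx Hy HD. set (D := x + y - 2 * e). set (P := e - x). set (Q := y - e).
  assert (HP : 0 <= P) by (unfold P; lra). assert (HQ : 0 <= Q) by (unfold Q; lra).
  assert (HPQ : P <= Q) by (unfold P, Q, D in *; lra).
  induction n.
  - simpl. unfold D. lra.
  - replace (x ^ S (S n) + y ^ S (S n) - 2 * e ^ S (S n)) with
      (e * (x ^ S n + y ^ S n - 2 * e ^ S n) + D * y ^ S n + P * (y ^ S n - x ^ S n))
      by (unfold D, P; simpl; ring).
    destruct IHn as [I1 I2].
    destruct (pow_diff_le x y n) as [J1 J2]; [lra|].
    assert (Hyn : 0 <= y ^ n) by (apply pow_le; lra).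
    assert (HySn : 0 <= y ^ S n) by (apply pow_le; lra).
    assert (He : 0 <= e) by lra.
    split.
    + assert (0 <= e * (x ^ S n + y ^ S n - 2 * e ^ S n)) by (apply Rmult_le_pos; lra).
      assert (0 <= D * y ^ S n) by (apply Rmult_le_pos; unfold D; lra).
      assert (0 <= P * (y ^ S n - x ^ S n)) by (apply Rmult_le_pos; lra).
      lra.
    + assert (A1 : e * (x ^ S n + y ^ S n - 2 * e ^ S n) <=
              INR (S n) * y ^ S n * D + INR (S n) * INR n * y ^ n * (P * Q)).
      { apply Rle_trans with (e * (INR (S n) * y ^ n * D + INR (S n) * INR n * y ^ pred n * (P * Q))).
        - apply Rmult_le_compat_l; lra.
        - assert (0 <= INR (S n)) by apply pos_INR.
          assert (0 <= INR n) by apply pos_INR.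
          assert (0 <= D) by (unfold D; lra).
          assert (0 <= P * Q) by (apply Rmult_le_pos; lra).
          assert (B1 : e * (INR (S n) * y ^ n * D) <= INR (S n) * y ^ S n * D).
          { replace (INR (S n) * y ^ S n * D) with (y * (INR (S n) * y ^ n * D)) by (simpl; ring).
            assert (0 <= INR (S n) * y ^ n * D) by (apply Rmult_le_pos; [apply Rmult_le_pos|]; lra).
            apply Rmult_le_compat_r; lra. }
          assert (B2 : e * (INR (S n) * INR n * y ^ pred n * (P * Q)) <= INR (S n) * INR n * y ^ n * (P * Q)).
          { destruct n.
            - simpl. lra.
            - simpl pred.
              replace (INR (S (S n)) * INR (S n) * y ^ S n * (P * Q)) with
                 (y * (INR (S (S n)) * INR (S n) * y ^ n * (P * Q))) by (simpl; ring).
              assert (0 <= y ^ n) by (apply pow_le; lra).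
              assert (0 <= INR (S (S n)) * INR (S n) * y ^ n * (P * Q)).
              { apply Rmult_le_pos; [|lra]. apply Rmult_le_pos; [|lra]. apply Rmult_le_pos; apply pos_INR. }
              apply Rmult_le_compat_r; lra. }
          lra. }
    assert (A2 : P * (y ^ S n - x ^ S n) <= 2 * INR (S n) * y ^ n * (P * Q)).
    { apply Rle_trans with (P * (INR (S n) * y ^ n * (y - x))).
      - apply Rmult_le_compat_l; lra.
      - replace (y - x) with (P + Q) by (unfold P, Q; ring).
        assert (0 <= INR (S n) * y ^ n) by (apply Rmult_le_pos; [apply pos_INR|lra]).
        assert (P * P <= P * Q) by (apply Rmult_le_compat_l; lra).
        nra. }
    rewrite !S_INR in *. simpl pred. simpl (y ^ S n) in *.
    nra.
Qed.

Definition GS (n : nat -> nat) (z : R) (N : nat) : R := sumN (fun j => z ^ S (n j)) N.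
Definition K1 (n : nat -> nat) (z : R) (N : nat) : R :=
  sumN (fun j => INR (S (n j)) * z ^ (n j)) N.
Definition K2 (n : nat -> nat) (z : R) (N : nat) : R :=
  sumN (fun j => INR (S (n j)) * INR (n j) * z ^ pred (n j)) N.

Lemma GS_nonneg n z N : 0 <= z -> 0 <= GS n z N.
Proof. intros; apply sumN_nonneg; intros; apply pow_le; auto. Qed.

Lemma GS_diff n x y N : 0 <= x <= y -> 0 <= GS n y N - GS n x N <= (y - x) * K1 n y N.
Proof.
  intros H. unfold GS, K1. induction N; cbn [sumN]; [lra|].
  destruct (pow_diff_le x y (n N) H). rewrite Rmult_plus_distr_l.
  replace ((y - x) * (INR (S (n N)) * y ^ n N)) with (INR (S (n N)) * y ^ n N * (y - x)) by ring.
  lra.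
Qed.

Lemma GS_delta n x e y N : 0 <= x <= e -> e <= y -> 0 <= x + y - 2 * e ->
  0 <= GS n x N + GS n y N - 2 * GS n e N <=
  (x + y - 2 * e) * K1 n y N + ((e - x) * (y - e)) * K2 n y N.
Proof.
  intros H1 H2 H3. unfold GS, K1, K2. induction N; cbn [sumN]; [lra|].
  destruct (mono_delta x e y (n N) H1 H2 H3). rewrite !Rmult_plus_distr_l.
  replace ((x + y - 2 * e) * (INR (S (n N)) * y ^ n N)) with (INR (S (n N)) * y ^ n N * (x + y - 2 * e)) by ring.
  replace ((e - x) * (y - e) * (INR (S (n N)) * INR (n N) * y ^ Init.Nat.pred (n N))) with
    (INR (S (n N)) * INR (n N) * y ^ Init.Nat.pred (n N) * ((e - x) * (y - e))) by ring.
  lra.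
Qed.

Lemma GS_delta_ge n x e y N : 0 <= x <= e -> e <= y -> 0 <= x + y - 2 * e ->
  n 0%nat = 0%nat -> (1 <= N)%nat ->
  x + y - 2 * e <= GS n x N + GS n y N - 2 * GS n e N.
Proof.
  intros H1 H2 H3 Hn HN. induction N; [lia|].
  destruct N.
  - unfold GS; cbn [sumN]. rewrite Hn, !pow_1. lra.
  - assert (IH := IHN ltac:(lia)). unfold GS in *; cbn [sumN] in *.
    destruct (mono_delta x e y (n (S N)) H1 H2 H3). lra.
Qed.

Lemma GS_incr n z N : 0 <= z -> GS n z N <= GS n z (S N).
Proof. intros. unfold GS; cbn [sumN]. assert (0 <= z ^ S (n N)) by (apply pow_le; auto). lra. Qed.

Lemma pow_split (z : R) a b j m : 0 <= z <= 1 -> (a + b * j <= m)%nat ->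
  z ^ m <= z ^ a * (z ^ b) ^ j.
Proof.
  intros Hz Hm. rewrite <- pow_mult, <- pow_add. apply pow_le1_mono; auto.
Qed.

Lemma GS_bound n z a b N : 0 <= z < 1 -> (1 <= b)%nat -> (forall j, a + b * j <= n j)%nat ->
  GS n z N <= z ^ S a * / (1 - z ^ b).
Proof.
  intros Hz Hb Hn. unfold GS.
  assert (Hzb : 0 <= z ^ b < 1).
  { split; [apply pow_le; lra|]. destruct b; [lia|]. simpl.
    assert (z ^ b <= 1) by (apply pow_le_one; split; lra). assert (0 <= z ^ b) by (apply pow_le; lra). nra. }
  apply Rle_trans with (sumN (fun j => z ^ S a * (z ^ b) ^ j) N).
  - apply sumN_le. intros j. apply pow_split; [lra|]. specialize (Hn j). lia.
  - rewrite sumN_scal. apply Rmult_le_compat_l; [apply pow_le; lra|]. apply sumN_geo; auto.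
Qed.

Lemma INR_S_le_pow2 m : INR (S m) <= 2 ^ m.
Proof.
  induction m; [simpl; lra|]. rewrite S_INR. replace (2 ^ S m) with (2 * 2 ^ m) by (simpl; ring).
  assert (1 <= 2 ^ m) by (apply pow_R1_Rle; lra). lra.
Qed.

Lemma INR_S_mul_le m : INR (S m) * INR m <= 2 * 3 ^ pred m.
Proof.
  destruct m; [simpl; lra|]. simpl pred.
  induction m; [simpl; lra|].
  rewrite !S_INR in *. replace (3 ^ S m) with (3 * 3 ^ m) by (simpl; ring).
  assert (0 <= INR m) by apply pos_INR. nra.
Qed.

Lemma K1_bound n z a b N : 0 <= z -> 2 * z < 1 -> (1 <= b)%nat -> (forall j, a + b * j <= n j)%nat ->
  K1 n z N <= (2 * z) ^ a * / (1 - (2 * z) ^ b).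
Proof.
  intros Hz Hz2 Hb Hn. unfold K1.
  set (w := 2 * z).
  assert (Hzb : 0 <= w ^ b < 1).
  { unfold w. split; [apply pow_le; lra|]. destruct b; [lia|]. simpl.
    assert ((2*z) ^ b <= 1) by (apply pow_le_one; split; lra). assert (0 <= (2*z) ^ b) by (apply pow_le; lra). nra. }
  apply Rle_trans with (sumN (fun j => w ^ a * (w ^ b) ^ j) N).
  - apply sumN_le. intros j. apply Rle_trans with (w ^ n j).
    + unfold w. rewrite Rpow_mult_distr. apply Rmult_le_compat_r; [apply pow_le; lra|].
      apply INR_S_le_pow2.
    + apply pow_split; [unfold w; lra|]. apply Hn.
  - rewrite sumN_scal. apply Rmult_le_compat_l; [apply pow_le; unfold w; lra|]. apply sumN_geo; auto.
Qed.

Lemma K2_bound n z a b N : 0 <= z -> 3 * z < 1 -> (1 <= b)%nat -> (forall j, a + b * j <= pred (n j))%nat ->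
  K2 n z N <= 2 * ((3 * z) ^ a * / (1 - (3 * z) ^ b)).
Proof.
  intros Hz Hz2 Hb Hn. unfold K2.
  set (w := 3 * z).
  assert (Hzb : 0 <= w ^ b < 1).
  { unfold w. split; [apply pow_le; lra|]. destruct b; [lia|]. simpl.
    assert ((3*z) ^ b <= 1) by (apply pow_le_one; split; lra). assert (0 <= (3*z) ^ b) by (apply pow_le; lra). nra. }
  apply Rle_trans with (sumN (fun j => 2 * (w ^ a * (w ^ b) ^ j)) N).
  - apply sumN_le. intros j. apply Rle_trans with (2 * w ^ pred (n j)).
    + unfold w. rewrite Rpow_mult_distr.
      assert (0 <= z ^ pred (n j)) by (apply pow_le; lra).
      assert (HH := INR_S_mul_le (n j)). nra.
    + apply Rmult_le_compat_l; [lra|]. apply pow_split; [unfold w; lra|]. apply Hn.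
  - rewrite sumN_scal, sumN_scal. apply Rmult_le_compat_l; [lra|].
    apply Rmult_le_compat_l; [apply pow_le; unfold w; lra|]. apply sumN_geo; auto.
Qed.

Definition ne (j : nat) : nat := (4 * j * j + 8 * j + 3)%nat.
Definition no (j : nat) : nat := (4 * j * j + 4 * j)%nat.
Definition EN (z : R) (N : nat) : R := 1 + 2 * GS ne z N.
Definition ON (z : R) (N : nat) : R := 2 * GS no z N.

Lemma ratio_mono (w c : R) a b : 0 <= w <= c -> c < 1 -> (1 <= b)%nat ->
  w ^ a * / (1 - w ^ b) <= c ^ a * / (1 - c ^ b).
Proof.
  intros Hw Hc Hb.
  assert (H1 : w ^ a <= c ^ a) by (apply pow_incr; lra).
  assert (H2 : w ^ b <= c ^ b) by (apply pow_incr; lra).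
  assert (H3 : c ^ b < 1).
  { destruct b; [lia|]. simpl. assert (c ^ b <= 1) by (apply pow_le_one; split; lra).
    assert (0 <= c ^ b) by (apply pow_le; lra). nra. }
  assert (0 <= w ^ a) by (apply pow_le; lra).
  apply Rmult_le_compat; auto.
  - left; apply Rinv_0_lt_compat. lra.
  - apply Rinv_le_contravar; lra.
Qed.

Lemma K1e_num z N : 0 <= z <= 1/6 -> 0 <= K1 ne z N <= 1/20.
Proof.
  intros Hz. split. { unfold K1. apply sumN_nonneg. intros j.
    apply Rmult_le_pos; [apply pos_INR| apply pow_le; lra]. }
  eapply Rle_trans. { apply (K1_bound ne z 3 8); try lra; try lia. intros j; unfold ne; nia. }
  eapply Rle_trans. { apply (ratio_mono (2*z) (1/3) 3 8); try lra; lia. }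
  assert (E : 1 - (1/3)^8 = 6560/6561) by (simpl; field). rewrite E.
  replace (/ (6560/6561)) with (6561/6560) by field. simpl. lra.
Qed.

Lemma K2e_num z N : 0 <= z <= 1/6 -> 0 <= K2 ne z N <= 3/5.
Proof.
  intros Hz. split. { unfold K2. apply sumN_nonneg. intros j.
    apply Rmult_le_pos; [apply Rmult_le_pos; apply pos_INR| apply pow_le; lra]. }
  eapply Rle_trans. { apply (K2_bound ne z 2 8); try lra; try lia. intros j; unfold ne.
    replace (4 * j * j + 8 * j + 3)%nat with (S (4 * j * j + 8 * j + 2)) by ring. simpl pred. nia. }
  assert (H := ratio_mono (3*z) (1/2) 2 8 ltac:(lra) ltac:(lra) ltac:(lia)).
  assert (E : 1 - (1/2)^8 = 255/256) by (simpl; field). rewrite E in H.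
  replace (/ (255/256)) with (256/255) in H by field.
  replace ((1/2)^2) with (1/4) in H by (simpl; field). lra.
Qed.

Lemma K1o_num z N : 0 <= z <= 1/6 -> 0 <= K1 no z N <= 11/10.
Proof.
  intros Hz. split. { unfold K1. apply sumN_nonneg. intros j.
    apply Rmult_le_pos; [apply pos_INR| apply pow_le; lra]. }
  eapply Rle_trans. { apply (K1_bound no z 0 8); try lra; try lia. intros j; unfold no; nia. }
  eapply Rle_trans. { apply (ratio_mono (2*z) (1/3) 0 8); try lra; lia. }
  assert (E : 1 - (1/3)^8 = 6560/6561) by (simpl; field). rewrite E.
  replace (/ (6560/6561)) with (6561/6560) by field. simpl. lra.
Qed.

Lemma coreB (ex ee ey ox oe oy D P Q k1e k1e' k2e k1o k1o' : R) :
  0 <= ee - ex <= P * k1e' -> 0 <= ey - ee <= Q * k1e ->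
  0 <= oe - ox <= P * k1o' -> 0 <= oy - oe <= Q * k1o ->
  0 <= ex + ey - 2 * ee <= D * k1e + (P * Q) * k2e ->
  D <= ox + oy - 2 * oe ->
  0 <= ee -> 0 <= oe -> (1 + 2 * ee) - 2 * oe <= 1 ->
  0 <= D -> 0 <= P -> 0 <= Q -> P * Q <= D / 6 ->
  0 <= k1e <= 1/20 -> 0 <= k1e' <= 1/20 -> 0 <= k2e <= 3/5 -> 0 <= k1o <= 11/10 -> 0 <= k1o' <= 11/10 ->
  ((1 + 2 * ex) - 2 * ox) * ((1 + 2 * ey) - 2 * oy) - 2 * (2 * ox) * (2 * oy) <=
  ((1 + 2 * ee) - 2 * oe) * ((1 + 2 * ee) - 2 * oe) - 2 * (2 * oe) * (2 * oe).
Proof.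
  intros Ha1 Ha2 Hb1 Hb2 HdE HdO Hee Hoe Hth HD HP HQ HPQ K1 K1' K2 K3 K3'.
  set (E := 1 + 2 * ee). set (O := 2 * oe).
  set (a1 := 2 * (ee - ex)). set (a2 := 2 * (ey - ee)).
  set (b1 := 2 * (oe - ox)). set (b2 := 2 * (oy - oe)).
  set (dE := 2 * (ex + ey - 2 * ee)). set (dO := 2 * (ox + oy - 2 * oe)).
  assert (Id : ((1 + 2 * ex) - 2 * ox) * ((1 + 2 * ey) - 2 * oy) - 2 * (2 * ox) * (2 * oy) -
               (((1 + 2 * ee) - 2 * oe) * ((1 + 2 * ee) - 2 * oe) - 2 * (2 * oe) * (2 * oe)) =
               (E - O) * dE - (E + O) * dO - a1 * a2 + a1 * b2 + a2 * b1 + b1 * b2).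
  { unfold E, O, a1, a2, b1, b2, dE, dO. ring. }
  assert (T1 : (E - O) * dE <= dE).
  { assert (0 <= dE) by (unfold dE; lra). assert (E - O <= 1) by (unfold E, O; lra). nra. }
  assert (T2 : - (E + O) * dO <= - dO).
  { assert (0 <= dO) by (unfold dO; lra). assert (1 <= E + O) by (unfold E, O; lra). nra. }
  assert (T3 : 0 <= a1 * a2) by (apply Rmult_le_pos; unfold a1, a2; lra).
  assert (A1 : a1 <= 2 * P * (1/20)) by (unfold a1; nra).
  assert (A2 : a2 <= 2 * Q * (1/20)) by (unfold a2; nra).
  assert (B1 : b1 <= 2 * P * (11/10)) by (unfold b1; nra).
  assert (B2 : b2 <= 2 * Q * (11/10)) by (unfold b2; nra).
  assert (0 <= a1) by (unfold a1; lra). assert (0 <= a2) by (unfold a2; lra).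
  assert (0 <= b1) by (unfold b1; lra). assert (0 <= b2) by (unfold b2; lra).
  assert (C1 : a1 * b2 <= (2 * P * (1/20)) * (2 * Q * (11/10))) by (apply Rmult_le_compat; lra).
  assert (C2 : a2 * b1 <= (2 * Q * (1/20)) * (2 * P * (11/10))) by (apply Rmult_le_compat; lra).
  assert (C3 : b1 * b2 <= (2 * P * (11/10)) * (2 * Q * (11/10))) by (apply Rmult_le_compat; lra).
  assert (DE : dE <= 2 * (D * (1/20) + (P * Q) * (3/5))).
  { unfold dE. assert (D * k1e <= D * (1/20)) by (apply Rmult_le_compat_l; lra).
    assert (P * Q * k2e <= P * Q * (3/5)) by (apply Rmult_le_compat_l; [nra|lra]). lra. }
  assert (DO : 2 * D <= dO) by (unfold dO; lra).
  assert (Fin : (E - O) * dE - (E + O) * dO - a1 * a2 + a1 * b2 + a2 * b1 + b1 * b2 <= 0).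
  { clearbody E O a1 a2 b1 b2 dE dO. clear - T1 T2 T3 C1 C2 C3 DE DO HPQ HD. lra. }
  subst E O a1 a2 b1 b2 dE dO. clear - Id Fin. lra.
Qed.

Lemma GS_ne_le_no z N : 0 <= z <= 1 -> GS ne z N <= GS no z N.
Proof.
  intros Hz. unfold GS. apply sumN_le. intros j. apply pow_le1_mono; auto.
  unfold ne, no. lia.
Qed.

Lemma regionB_N x e y N : 0 <= x -> x <= e -> e <= y -> y <= 1/6 ->
  0 <= x + y - 2 * e -> (e - x) * (y - e) <= (x + y - 2 * e) / 6 ->
  (EN x N - ON x N) * (EN y N - ON y N) - 2 * ON x N * ON y N <=
  (EN e N - ON e N) * (EN e N - ON e N) - 2 * ON e N * ON e N.
Proof.
  intros Hx Hxe Hey Hy HD HPQ.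
  destruct N as [|N].
  { unfold EN, ON, GS. simpl. lra. }
  unfold EN, ON.
  apply (coreB (GS ne x (S N)) (GS ne e (S N)) (GS ne y (S N))
               (GS no x (S N)) (GS no e (S N)) (GS no y (S N))
               (x + y - 2 * e) (e - x) (y - e)
               (K1 ne y (S N)) (K1 ne e (S N)) (K2 ne y (S N)) (K1 no y (S N)) (K1 no e (S N))).
  - apply GS_diff; lra.
  - apply GS_diff; lra.
  - apply GS_diff; lra.
  - apply GS_diff; lra.
  - apply GS_delta; lra.
  - apply GS_delta_ge; try lra; try lia. reflexivity.
  - apply GS_nonneg; lra.
  - apply GS_nonneg; lra.
  - assert (GS ne e (S N) <= GS no e (S N)) by (apply GS_ne_le_no; lra). lra.
  - lra.
  - lra.
  - lra.
  - lra.
  - apply K1e_num; lra.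
  - apply K1e_num; lra.
  - apply K2e_num; lra.
  - apply K1o_num; lra.
  - apply K1o_num; lra.
Qed.

Lemma exp_nat_split (t : R) (k : nat) : exp t = exp (t / INR (S k)) ^ (S k).
Proof.
  rewrite <- exp_pow. f_equal. field. apply not_0_INR. lia.
Qed.

Lemma exp_ge_pow (t : R) (k : nat) : 0 <= 1 + t / INR (S k) -> (1 + t / INR (S k)) ^ (S k) <= exp t.
Proof.
  intros H. rewrite (exp_nat_split t k). apply pow_incr. split; auto.
  apply exp_ineq1_le.
Qed.

Lemma exp3_ge : 18 <= exp 3.
Proof.
  assert (H := exp_ge_pow 3 63).
  assert (E : (1 + 3 / INR 64) = 67/64).
  { replace (INR 64) with 64 by (rewrite INR_IZR_INZ; simpl; lra). field. }
  rewrite E in H. assert (18 <= (67/64)^64) by (simpl; lra). lra.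
Qed.

Lemma exp1_ge : 5/2 <= exp 1.
Proof.
  assert (H := exp_ge_pow 1 7).
  assert (E : (1 + 1 / INR 8) = 9/8).
  { replace (INR 8) with 8 by (rewrite INR_IZR_INZ; simpl; lra). field. }
  rewrite E in H. assert (5/2 <= (9/8)^8) by (simpl; lra). apply Rle_trans with ((9/8)^8); auto; lra.
Qed.

Lemma cosh_bound (B : R) : 0 <= B <= 1 -> 2 + 7/8 * (B * B) <= exp B + exp (- B).
Proof.
  intros HB. set (u := B / 8).
  assert (E1 : exp B = exp u ^ 8).
  { unfold u. replace 8%nat with (S 7) by reflexivity. rewrite (exp_nat_split B 7).
    f_equal. f_equal. replace (INR (S 7)) with 8 by (rewrite INR_IZR_INZ; simpl; lra). reflexivity. }
  assert (E2 : exp (- B) = exp (- u) ^ 8).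
  { unfold u. replace 8%nat with (S 7) by reflexivity. rewrite (exp_nat_split (-B) 7).
    f_equal. f_equal. replace (INR (S 7)) with 8 by (rewrite INR_IZR_INZ; simpl; lra). field. }
  assert (Hu : 0 <= u <= 1/8) by (unfold u; lra).
  assert (H1 : (1 + u) ^ 8 <= exp u ^ 8).
  { apply pow_incr. split; [lra|]. apply exp_ineq1_le. }
  assert (H2 : (1 - u) ^ 8 <= exp (- u) ^ 8).
  { apply pow_incr. split; [lra|]. replace (1 - u) with (1 + - u) by ring. apply exp_ineq1_le. }
  assert (H3 : 2 + 56 * (u * u) <= (1 + u) ^ 8 + (1 - u) ^ 8).
  { assert (0 <= u * u) by nra. assert (0 <= u*u*u*u) by nra. assert (0 <= u*u*u*u*u*u) by nra.
    assert (0 <= u*u*u*u*u*u*u*u) by nra. simpl. nra. }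
  replace (B * B) with (64 * (u * u)) by (unfold u; field). lra.
Qed.

Lemma regionB_exp (al be R : R) :
  0 < be -> be <= R -> R <= al -> al * be = R * R -> R - be <= 1 -> 2 <= be -> exp (- R) <= 1/18 ->
  let x := exp (- al) in let y := exp (- be) in let e := exp (- R) in
  0 <= x /\ x <= e /\ e <= y /\ y <= 1/6 /\ 0 <= x + y - 2 * e /\
  (e - x) * (y - e) <= (x + y - 2 * e) / 6.
Proof.
  intros Hbe HbR HRa Hab HB Hbe2 He x y e.
  assert (He' : e <= 1/18) by (unfold e; lra). clear He.
  set (B := R - be). set (d := al + be - 2 * R).
  assert (Hd : d * be = B * B) by (unfold d, B; nra).
  assert (Hd0 : 0 <= d).
  { destruct (Rle_lt_dec 0 d); auto. assert (d * be < 0) by nra. nra. }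
  assert (HB0 : 0 <= B) by (unfold B; lra).
  assert (Hepos : 0 < e) by apply exp_pos.
  assert (Hx : x = e * exp (- (d + B))).
  { unfold x, e. rewrite <- exp_plus. f_equal. unfold d, B. ring. }
  assert (Hy : y = e * exp B).
  { unfold y, e. rewrite <- exp_plus. f_equal. unfold B. ring. }
  assert (Hxy : x * y = e * e * exp (- d)).
  { rewrite Hx, Hy. replace (e * exp (- (d + B)) * (e * exp B)) with (e * e * (exp (- (d + B)) * exp B)) by ring.
    rewrite <- exp_plus. f_equal. f_equal. ring. }
  assert (Hem : exp (- (d + B)) >= exp (- B) - d).
  { replace (- (d + B)) with (- d + - B) by ring. rewrite exp_plus.
    assert (1 - d <= exp (- d)) by (replace (1 - d) with (1 + - d) by ring; apply exp_ineq1_le).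
    assert (exp (- B) <= 1) by (rewrite <- exp_0; apply exp_le; lra).
    assert (0 < exp (- B)) by apply exp_pos.
    nra. }
  assert (Hc := cosh_bound B ltac:(unfold B; lra)).
  assert (HD : x + y - 2 * e >= 3/4 * e * d).
  { rewrite Hx, Hy.
    assert (7/8 * (B * B) >= 7/4 * d) by nra.
    assert (e * (exp (- (d + B)) + exp B - 2) >= e * (3/4 * d)).
    { apply Rmult_ge_compat_l; [lra|]. lra. }
    nra. }
  assert (Hed : 0 <= e * d) by (apply Rmult_le_pos; lra).
  assert (Hexp : 1 - exp (- d) <= d).
  { assert (1 - d <= exp (- d)) by (replace (1 - d) with (1 + - d) by ring; apply exp_ineq1_le). lra. }
  assert (Hey : e <= y) by (unfold e, y; apply exp_le; lra).
  assert (Hxe : x <= e) by (unfold e, x; apply exp_le; lra).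
  assert (Hy3 : y <= 3 * e).
  { rewrite Hy. assert (exp B <= 3) by (apply Rle_trans with (exp 1); [apply exp_le; unfold B; lra| apply exp_le_3]).
    nra. }
  repeat split.
  - left; apply exp_pos.
  - auto.
  - auto.
  - lra.
  - lra.
  - replace ((e - x) * (y - e)) with (e * (x + y - 2 * e) + (e * e - x * y)) by ring.
    rewrite Hxy.
    assert (e * e - e * e * exp (- d) <= e * (e * d)).
    { replace (e * e - e * e * exp (- d)) with (e * e * (1 - exp (- d))) by ring.
      replace (e * (e * d)) with (e * e * d) by ring.
      apply Rmult_le_compat_l; [nra|lra]. }
    assert (e * (e * d) <= e * (4/3 * (x + y - 2 * e))) by (apply Rmult_le_compat_l; lra).
    assert (0 <= x + y - 2 * e) by lra.
    nra.
Qed.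

Definition lim_of (u : nat -> R) : R := epsilon (inhabits 0) (fun l => Un_cv u l).

Lemma lim_of_spec u : (exists l, Un_cv u l) -> Un_cv u (lim_of u).
Proof. intros H. unfold lim_of. apply (epsilon_spec (inhabits 0) (fun l => Un_cv u l) H). Qed.

Lemma zsum_eq f l : Un_cv (zpartial f) l -> zsum f = l.
Proof.
  intros H. unfold zsum.
  assert (H' := epsilon_spec (inhabits 0) (fun l => Un_cv (zpartial f) l) (ex_intro _ l H)).
  apply (UL_sequence _ _ _ H' H).
Qed.

Lemma cv_const c : Un_cv (fun _ => c) c.
Proof. intros eps Heps. exists 0%nat. intros n _. unfold Rdist. rewrite Rminus_diag, Rabs_R0. lra. Qed.

Lemma cv_evenodd u l : Un_cv (fun n => u (2 * n)%nat) l -> Un_cv (fun n => u (S (2 * n))) l -> Un_cv u l.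
Proof.
  intros H1 H2 eps Heps. destruct (H1 eps Heps) as [N1 HN1]. destruct (H2 eps Heps) as [N2 HN2].
  exists (2 * (N1 + N2))%nat. intros n Hn.
  destruct (Nat.Even_or_Odd n) as [[m Hm]|[m Hm]]; subst n.
  - apply HN1. lia.
  - replace (2 * m + 1)%nat with (S (2 * m)) by lia. apply HN2. lia.
Qed.

Lemma cv_pow_sub (z : R) (m : nat -> nat) : 0 <= z < 1 -> (forall M, (M <= m M)%nat) ->
  Un_cv (fun M => z ^ m M) 0.
Proof.
  intros Hz Hm eps Heps.
  destruct (pow_lt_1_zero z ltac:(rewrite Rabs_right; lra) eps Heps) as [N HN].
  exists N. intros n Hn. unfold Rdist. rewrite Rminus_0_r. apply HN. specialize (Hm n). lia.
Qed.

Lemma cv_shift u l : Un_cv u l -> Un_cv (fun n => u (S n)) l.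
Proof.
  intros H eps Heps. destruct (H eps Heps) as [N HN]. exists N. intros n Hn. apply HN. lia.
Qed.

Lemma cv_le u l c : Un_cv u l -> (forall n, u n <= c) -> l <= c.
Proof. intros H Hc. apply (Rle_cv_lim (Vn := fun _ => c) Hc H (cv_const c)). Qed.

Lemma cv_ge u l c : Un_cv u l -> (forall n, c <= u n) -> c <= l.
Proof. intros H Hc. apply (Rle_cv_lim (Un := fun _ => c) Hc (cv_const c) H). Qed.

Definition Elim (z : R) : R := lim_of (EN z).
Definition Olim (z : R) : R := lim_of (ON z).

Lemma GSne_bound z N : 0 <= z < 1 -> GS ne z N <= z ^ 4 * / (1 - z ^ 8).
Proof. intros Hz. apply (GS_bound ne z 3 8); [auto|lia|intros j; unfold ne; nia]. Qed.

Lemma GSno_bound z N : 0 <= z < 1 -> GS no z N <= z ^ 1 * / (1 - z ^ 8).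
Proof. intros Hz. apply (GS_bound no z 0 8); [auto|lia|intros j; unfold no; nia]. Qed.

Lemma EN_cv z : 0 <= z < 1 -> Un_cv (EN z) (Elim z).
Proof.
  intros Hz. unfold Elim. apply lim_of_spec.
  assert (Hg : Un_growing (EN z)).
  { intros n. unfold EN. assert (H := GS_incr ne z n ltac:(lra)). lra. }
  assert (Hb : has_ub (EN z)).
  { exists (1 + 2 * (z ^ 4 * / (1 - z ^ 8))). intros v [n Hn]. subst v. unfold EN.
    assert (H := GSne_bound z n Hz). lra. }
  destruct (growing_cv _ Hg Hb) as [l Hl]. exists l; auto.
Qed.

Lemma ON_cv z : 0 <= z < 1 -> Un_cv (ON z) (Olim z).
Proof.
  intros Hz. unfold Olim. apply lim_of_spec.
  assert (Hg : Un_growing (ON z)).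
  { intros n. unfold ON. assert (H := GS_incr no z n ltac:(lra)). lra. }
  assert (Hb : has_ub (ON z)).
  { exists (2 * (z ^ 1 * / (1 - z ^ 8))). intros v [n Hn]. subst v. unfold ON.
    assert (H := GSno_bound z n Hz). lra. }
  destruct (growing_cv _ Hg Hb) as [l Hl]. exists l; auto.
Qed.

Lemma zpartial_0 f : zpartial f 0 = f 0%Z.
Proof. unfold zpartial. simpl. reflexivity. Qed.

Lemma zpartial_S f N : zpartial f (S N) = zpartial f N + f (Z.of_nat (S N)) + f (- Z.of_nat (S N))%Z.
Proof.
  unfold zpartial. replace (2 * S N)%nat with (S (S (2 * N))) by lia.
  rewrite tech5. rewrite decomp_sum by lia. simpl pred.
  rewrite (sum_eq (fun i : nat => f (Z.of_nat (S i) - Z.of_nat (S N))%Z)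
                  (fun n : nat => f (Z.of_nat n - Z.of_nat N)%Z)).
  2: { intros i _. f_equal. lia. }
  replace (Z.of_nat 0 - Z.of_nat (S N))%Z with (- Z.of_nat (S N))%Z by lia.
  replace (Z.of_nat (S (S (2 * N))) - Z.of_nat (S N))%Z with (Z.of_nat (S N)) by lia.
  replace (N + (N + 0))%nat with (2 * N)%nat by lia. ring.
Qed.

Definition X (t : R) : R := exp (- PI * t).

Lemma exp_sq (t : R) (k : nat) : exp (- PI * INR k ^ 2 * t) = X t ^ (k * k).
Proof. unfold X. rewrite <- exp_pow. f_equal. rewrite mult_INR. ring. Qed.

Fixpoint alt4 (z : R) (N : nat) : R :=
  match N with O => 0 | S M => alt4 z M + (-1) ^ (S M) * z ^ (S M * S M) end.

Lemma f4_pos t k : powerRZ (-1) (Z.of_nat k) * exp (- PI * IZR (Z.of_nat k) ^ 2 * t) =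
   (-1) ^ k * X t ^ (k * k).
Proof. rewrite <- pow_powerRZ, <- INR_IZR_INZ, exp_sq. reflexivity. Qed.

Lemma f4_neg t k : powerRZ (-1) (- Z.of_nat k) * exp (- PI * IZR (- Z.of_nat k) ^ 2 * t) =
   (-1) ^ k * X t ^ (k * k).
Proof.
  rewrite powerRZ_neg', <- pow_powerRZ, opp_IZR, <- INR_IZR_INZ.
  replace ((- INR k) ^ 2) with (INR k ^ 2) by ring. rewrite exp_sq.
  f_equal. rewrite <- pow_inv. f_equal. field.
Qed.

Lemma zpartial4 t N :
  zpartial (fun k => powerRZ (-1) k * exp (- PI * IZR k ^ 2 * t)) N = 1 + 2 * alt4 (X t) N.
Proof.
  induction N.
  - rewrite zpartial_0. simpl. replace (- PI * (0 * (0 * 1)) * t) with 0 by ring. rewrite exp_0. ring.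
  - rewrite zpartial_S, IHN, f4_pos, f4_neg. cbn [alt4]. ring.
Qed.

Lemma alt4_even z M : alt4 z (2 * M) = GS ne z M - GS no z M.
Proof.
  induction M.
  - unfold GS. simpl. ring.
  - replace (2 * S M)%nat with (S (S (2 * M))) by lia. cbn [alt4]. rewrite IHM.
    unfold GS. cbn [sumN].
    rewrite pow_1_odd. replace (S (S (2 * M))) with (2 * S M)%nat by lia. rewrite pow_1_even.
    replace (S (2 * M) * S (2 * M))%nat with (S (no M)) by (unfold no; nia).
    replace (2 * S M * (2 * S M))%nat with (S (ne M)) by (unfold ne; nia).
    ring.
Qed.

Lemma alt4_odd z M : alt4 z (S (2 * M)) = GS ne z M - GS no z M - z ^ S (no M).
Proof.
  cbn [alt4]. rewrite alt4_even, pow_1_odd.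
  replace (S (2 * M) * S (2 * M))%nat with (S (no M)) by (unfold no; nia). ring.
Qed.

Lemma X_range t : 0 < t -> 0 < X t < 1.
Proof.
  intros Ht. unfold X. split; [apply exp_pos|]. rewrite <- exp_0. apply exp_increasing.
  assert (0 < PI) by apply PI_RGT_0. nra.
Qed.

Lemma theta4_eq t : 0 < t -> theta4 t = Elim (X t) - Olim (X t).
Proof.
  intros Ht. destruct (X_range t Ht) as [H0 H1]. unfold theta4. apply zsum_eq.
  apply cv_evenodd.
  - apply (Un_cv_ext (fun n => EN (X t) n - ON (X t) n)).
    { intros n. rewrite zpartial4, alt4_even. unfold EN, ON. ring. }
    apply CV_minus; [apply EN_cv | apply ON_cv]; lra.
  - apply (Un_cv_ext (fun n => (EN (X t) n - ON (X t) n) - 2 * X t ^ S (no n))).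
    { intros n. rewrite zpartial4, alt4_odd. unfold EN, ON. ring. }
    replace (Elim (X t) - Olim (X t)) with ((Elim (X t) - Olim (X t)) - 2 * 0) by ring.
    apply CV_minus; [apply CV_minus; [apply EN_cv | apply ON_cv]; lra|].
    apply CV_mult; [apply cv_const|]. apply cv_pow_sub; [lra|]. intros M; unfold no; nia.
Qed.

Lemma fo_pos t k : exp (- PI * IZR (2 * Z.of_nat k + 1) ^ 2 * t) = X t ^ S (no k).
Proof.
  replace (2 * Z.of_nat k + 1)%Z with (Z.of_nat (2 * k + 1)) by lia.
  rewrite <- INR_IZR_INZ, exp_sq. f_equal. unfold no. nia.
Qed.

Lemma fo_neg t k : exp (- PI * IZR (2 * (- Z.of_nat (S k)) + 1) ^ 2 * t) = X t ^ S (no k).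
Proof.
  replace (2 * (- Z.of_nat (S k)) + 1)%Z with (- Z.of_nat (2 * k + 1))%Z by lia.
  rewrite opp_IZR, <- INR_IZR_INZ. replace ((- INR (2 * k + 1)) ^ 2) with (INR (2 * k + 1) ^ 2) by ring.
  rewrite exp_sq. f_equal. unfold no. nia.
Qed.

Lemma zpartialo t N :
  zpartial (fun k => exp (- PI * IZR (2 * k + 1) ^ 2 * t)) N = 2 * GS no (X t) N + X t ^ S (no N).
Proof.
  induction N.
  - rewrite zpartial_0. unfold GS. cbn [sumN]. replace (2 * 0 + 1)%Z with (Z.of_nat (2 * 0 + 1)) by lia.
    rewrite <- INR_IZR_INZ, exp_sq. unfold no. simpl. ring.
  - rewrite zpartial_S, IHN, fo_pos, fo_neg. unfold GS. cbn [sumN]. ring.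
Qed.

Lemma thetao_eq t : 0 < t -> thetao t = Olim (X t).
Proof.
  intros Ht. destruct (X_range t Ht) as [H0 H1]. unfold thetao. apply zsum_eq.
  apply (Un_cv_ext (fun n => ON (X t) n + X t ^ S (no n))).
  { intros n. rewrite zpartialo. unfold ON. ring. }
  replace (Olim (X t)) with (Olim (X t) + 0) by ring.
  apply CV_plus; [apply ON_cv; lra|]. apply cv_pow_sub; [lra|]. intros M; unfold no; nia.
Qed.

Lemma alt4_even_step z N : 0 <= z <= 1 -> alt4 z (2 * S N) <= alt4 z (2 * N).
Proof.
  intros Hz. rewrite !alt4_even. unfold GS. cbn [sumN].
  assert (z ^ S (ne N) <= z ^ S (no N)) by (apply pow_le1_mono; auto; unfold ne, no; lia). lra.
Qed.

Lemma alt4_even_le0 z N : 0 <= z <= 1 -> alt4 z (2 * N) <= 0.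
Proof.
  intros Hz. induction N. { simpl. lra. } assert (H := alt4_even_step z N Hz). lra.
Qed.

Lemma alt4_even_le1 z N : 0 <= z <= 1 -> alt4 z (2 * S N) <= - z + z ^ 4.
Proof.
  intros Hz. induction N.
  - rewrite alt4_even. unfold GS, ne, no. cbn [sumN]. simpl. lra.
  - assert (H := alt4_even_step z (S N) Hz). lra.
Qed.

Fixpoint altF (g : nat -> R) (j L : nat) : R :=
  match L with O => 0 | S L' => g j - altF g (S j) L' end.

Lemma altF_snoc g L : forall j, altF g j (S L) = altF g j L + (-1) ^ L * g (j + L)%nat.
Proof.
  induction L; intros j.
  - simpl. rewrite Nat.add_0_r. ring.
  - change (altF g j (S (S L))) with (g j - altF g (S j) (S L)).
    rewrite IHL. change (altF g j (S L)) with (g j - altF g (S j) L).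
    replace (S j + L)%nat with (j + S L)%nat by lia. simpl. ring.
Qed.

Section Alt.
Variable g : nat -> R.
Variable G : R.
Hypothesis g_pos : forall k, 0 < g k.
Hypothesis g_le : forall k, g k <= G.
Hypothesis g_lc : forall k, g k * g (S (S k)) <= g (S k) * g (S k).

Lemma g_prop j : g (S j) <= g j -> forall i, g (S (j + i)) <= g (j + i).
Proof.
  intros H i. induction i. { rewrite Nat.add_0_r. auto. }
  replace (S (j + S i)) with (S (S (j + i))) by lia. replace (j + S i)%nat with (S (j + i)) by lia.
  assert (H1 := g_lc (j + i)). assert (H2 := g_pos (j + i)). assert (H3 := g_pos (S (j + i))).
  assert (H4 := g_pos (S (S (j + i)))). nra.
Qed.

Lemma g_dec L : forall j, (forall i, g (S (j + i)) <= g (j + i)) -> 0 <= altF g j L <= g j.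
Proof.
  induction L; intros j Hj.
  - simpl. assert (H := g_pos j). lra.
  - simpl. assert (IH := IHL (S j) ltac:(intros i; replace (S j + i)%nat with (j + S i)%nat by lia;
                                          apply Hj)).
    assert (H := Hj 0%nat). rewrite Nat.add_0_r in H. lra.
Qed.

Lemma alt_bound_aux L : (forall j, altF g j L <= G) /\ (forall j, altF g j (S L) <= G).
Proof.
  induction L.
  - split; intros j; simpl.
    + assert (H := g_pos 0%nat). assert (H' := g_le 0%nat). lra.
    + assert (H' := g_le j). lra.
  - destruct IHL as [IH1 IH2]. split; [exact IH2|]. intros j.
    change (altF g j (S (S L))) with (g j - altF g (S j) (S L)).
    destruct (Rle_lt_dec (g (S (S j))) (g (S j))) as [Hd|Hi].
    + assert (H := g_dec (S L) (S j) (g_prop (S j) Hd)). assert (H' := g_le j). lra.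
    + assert (Hgj : g j < g (S j)).
      { destruct (Rle_lt_dec (g (S j)) (g j)) as [Hc|Hc]; auto.
        assert (H := g_prop j Hc 1%nat). replace (S (j + 1)) with (S (S j)) in H by lia.
        replace (j + 1)%nat with (S j) in H by lia. lra. }
      change (altF g (S j) (S L)) with (g (S j) - altF g (S (S j)) L).
      assert (H := IH1 (S (S j))). lra.
Qed.

Lemma alt_bound L j : altF g j L <= G.
Proof. apply alt_bound_aux. Qed.
End Alt.

Definition gy (y : R) (k : nat) : R := y ^ (k * k) - y ^ (S k * S k).

Lemma alt4_altF y L : 1 + 2 * alt4 y L = altF (gy y) 0 L + (-1) ^ L * y ^ (L * L).
Proof.
  induction L.
  - simpl. ring.
  - rewrite altF_snoc. cbn [alt4]. simpl (0 + L)%nat. change (gy y L) with (y ^ (L * L) - y ^ (S L * S L)).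
    replace ((-1) ^ S L) with (- (-1) ^ L) by (simpl; ring).
    replace (1 + 2 * (alt4 y L + - (-1) ^ L * y ^ (S L * S L))) with
      ((1 + 2 * alt4 y L) - 2 * (-1) ^ L * y ^ (S L * S L)) by ring.
    rewrite IHL. ring.
Qed.

Lemma bern1 (d : R) m : 0 <= d <= 1 -> 1 - INR m * d <= (1 - d) ^ m.
Proof.
  intros Hd. induction m. { simpl. lra. }
  rewrite S_INR. simpl. assert (0 <= (1 - d) ^ m) by (apply pow_le; lra).
  assert (0 <= INR m) by apply pos_INR. nra.
Qed.

Lemma bern2 (d : R) m : 0 <= d <= 1 -> (1 - d) ^ m * (1 + INR m * d) <= 1.
Proof.
  intros Hd. induction m. { simpl. lra. }
  rewrite S_INR. simpl. assert (0 <= (1 - d) ^ m) by (apply pow_le; lra).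
  assert (0 <= INR m) by apply pos_INR.
  assert (H1 : (1 - d) * (1 + (INR m + 1) * d) <= 1 + INR m * d) by nra.
  assert (H2 : (1 - d) ^ m * ((1 - d) * (1 + (INR m + 1) * d)) <= (1 - d) ^ m * (1 + INR m * d))
    by (apply Rmult_le_compat_l; lra).
  replace ((1 - d) * (1 - d) ^ m * (1 + (INR m + 1) * d)) with ((1 - d) ^ m * ((1 - d) * (1 + (INR m + 1) * d))) by ring.
  lra.
Qed.

Lemma lc_core (w y : R) : 0 <= w <= 1 -> 0 <= y <= 1 ->
  (1 - w) * (w * w * (y * y) - w * w * w * (y * y * y * y * y * y)) <= (w - w * w * (y * y)) * (w - w * w * (y * y)).
Proof.
  intros Hw Hy.
  replace (y * y * y * y * y * y) with ((y * y) * (y * y) * (y * y)) by ring.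
  set (t := y * y).
  assert (Ht : 0 <= t <= 1) by (unfold t; nra).
  assert (E : (w - w * w * t) * (w - w * w * t) - (1 - w) * (w * w * t - w * w * w * (t * t * t)) =
             w * w * ((1 - t) * (1 - w * t - w * t * t + w * w * t * t))).
  { ring. }
  assert (0 <= 1 - w * t - w * t * t + w * w * t * t).
  { assert (0 <= w * (1 - w) * t * (1 - t)) by (repeat apply Rmult_le_pos; lra).
    assert (0 <= t * (1 - w) * (1 - w)) by (repeat apply Rmult_le_pos; lra).
    assert (w * t * t * (1 - w) <= w * t * (1 - w)) by lra.
    assert (w * t * (2 - w) <= t) by lra. lra. }
  assert (0 <= w * w * ((1 - t) * (1 - w * t - w * t * t + w * w * t * t))).
  { apply Rmult_le_pos; [nra|]. apply Rmult_le_pos; lra. }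
  lra.
Qed.

Lemma gy_facts y k : 0 < y < 1 ->
  let f := y ^ (k * k) in let w := y ^ (2 * k + 1) in
  gy y k = f * (1 - w) /\ gy y (S k) = f * w * (1 - w * (y * y)) /\
  gy y (S (S k)) = f * w * w * (y * y) * (1 - w * (y * y * y * y)).
Proof.
  intros Hy f w.
  assert (E1 : y ^ (S k * S k) = f * w).
  { unfold f, w. rewrite <- pow_add. f_equal. nia. }
  assert (E2 : y ^ (S (S k) * S (S k)) = f * w * w * (y * y)).
  { unfold f, w. rewrite <- !pow_add. replace (y * y) with (y ^ 2) by ring. rewrite <- pow_add. f_equal. nia. }
  assert (E3 : y ^ (S (S (S k)) * S (S (S k))) = f * w * w * w * (y * y * y * y * y * y)).
  { unfold f, w. rewrite <- !pow_add. replace (y * y * y * y * y * y) with (y ^ 6) by ring.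
    rewrite <- pow_add. f_equal. nia. }
  unfold gy. rewrite E1, E2, E3. fold f. repeat split; ring.
Qed.

Lemma gy_pos y k : 0 < y < 1 -> 0 < gy y k.
Proof.
  intros Hy. destruct (gy_facts y k Hy) as [E _]. rewrite E.
  assert (0 < y ^ (k * k)) by (apply pow_lt; lra).
  assert (y ^ (2 * k + 1) < 1).
  { replace (2 * k + 1)%nat with (S (2 * k)) by lia. change (y ^ S (2 * k)) with (y * y ^ (2 * k)).
    assert (y ^ (2 * k) <= 1) by (apply pow_le_one; split; lra). assert (0 <= y ^ (2 * k)) by (apply pow_le; lra). nra. }
  nra.
Qed.

Lemma gy_lc y k : 0 < y < 1 -> gy y k * gy y (S (S k)) <= gy y (S k) * gy y (S k).
Proof.
  intros Hy. destruct (gy_facts y k Hy) as [E1 [E2 E3]]. rewrite E1, E2, E3.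
  set (f := y ^ (k * k)). set (w := y ^ (2 * k + 1)).
  assert (Hf : 0 <= f) by (apply pow_le; lra).
  assert (Hw : 0 <= w <= 1) by (split; [apply pow_le; lra| apply pow_le_one; lra]).
  assert (H := lc_core w y Hw ltac:(lra)).
  assert (0 <= f * f) by nra.
  replace (f * (1 - w) * (f * w * w * (y * y) * (1 - w * (y * y * y * y)))) with
     ((f * f) * ((1 - w) * (w * w * (y * y) - w * w * w * (y * y * y * y * y * y)))) by ring.
  replace (f * w * (1 - w * (y * y)) * (f * w * (1 - w * (y * y)))) with
     ((f * f) * ((w - w * w * (y * y)) * (w - w * w * (y * y)))) by ring.
  apply Rmult_le_compat_l; auto.
Qed.

Lemma gy_le y k : 4/5 <= y < 1 -> gy y k <= 13/20.
Proof.
  intros Hy. destruct (gy_facts y k ltac:(lra)) as [E _]. rewrite E.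
  set (d := 1 - y). assert (Hd : 0 < d <= 1/5) by (unfold d; lra).
  replace y with (1 - d) by (unfold d; ring).
  assert (B1 := bern1 d (2 * k + 1) ltac:(lra)).
  assert (B2 := bern2 d (k * k) ltac:(lra)).
  rewrite mult_INR in B2. rewrite plus_INR, mult_INR in B1. simpl (INR 1) in B1. simpl (INR 2) in B1.
  set (K := INR k) in *. assert (HK : 0 <= K) by apply pos_INR.
  set (f := (1 - d) ^ (k * k)) in *. set (w := (1 - d) ^ (2 * k + 1)) in *.
  assert (Hf : 0 <= f) by (apply pow_le; lra).
  assert (Q : (2 * K + 1) * d <= 13/20 * (1 + K * K * d)).
  { assert (0 <= d * ((13/20 * K - 1) * (13/20 * K - 1))) by (apply Rmult_le_pos; [lra| apply Rle_0_sqr]).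
    lra. }
  assert (f * (1 - w) <= f * ((2 * K + 1) * d)) by (apply Rmult_le_compat_l; lra).
  assert (f * ((2 * K + 1) * d) <= f * (13/20 * (1 + K * K * d))) by (apply Rmult_le_compat_l; lra).
  nra.
Qed.

Lemma theta_partial_unimodal y N : 4/5 <= y < 1 -> 1 + 2 * alt4 y (2 * N) <= 13/20 + y ^ (2 * N * (2 * N)).
Proof.
  intros Hy. rewrite alt4_altF. rewrite pow_1_even.
  assert (Hy' : 0 < y < 1) by (split; lra).
  assert (H := alt_bound (gy y) (13/20) (fun k => gy_pos y k Hy') (fun k => gy_le y k Hy)
                 (fun k => gy_lc y k Hy') (2 * N) 0).
  lra.
Qed.

Lemma Elim_bounds z : 0 < z < 1 -> 1 <= Elim z <= 1 + 2 * (z ^ 4 * / (1 - z ^ 8)).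
Proof.
  intros Hz. assert (H := EN_cv z ltac:(split; lra)). split.
  - apply (cv_ge _ _ 1 H). intros n. unfold EN. assert (0 <= GS ne z n) by (apply GS_nonneg; lra). lra.
  - apply (cv_le _ _ _ H). intros n. unfold EN. assert (H' := GSne_bound z n ltac:(split; lra)). lra.
Qed.

Lemma Olim_bounds z : 0 < z < 1 -> 0 <= Olim z <= 2 * (z ^ 1 * / (1 - z ^ 8)).
Proof.
  intros Hz. assert (H := ON_cv z ltac:(split; lra)). split.
  - apply (cv_ge _ _ 0 H). intros n. unfold ON. assert (0 <= GS no z n) by (apply GS_nonneg; lra). lra.
  - apply (cv_le _ _ _ H). intros n. unfold ON. assert (H' := GSno_bound z n ltac:(split; lra)). lra.
Qed.

Lemma theta_cv z : 0 < z < 1 -> Un_cv (fun N => 1 + 2 * alt4 z (2 * N)) (Elim z - Olim z).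
Proof.
  intros Hz. apply (Un_cv_ext (fun N => EN z N - ON z N)).
  { intros n. rewrite alt4_even. unfold EN, ON. ring. }
  apply CV_minus; [apply EN_cv | apply ON_cv]; split; lra.
Qed.

Lemma theta_le1 z : 0 < z < 1 -> Elim z - Olim z <= 1.
Proof.
  intros Hz. apply (cv_le _ _ _ (theta_cv z Hz)). intros n.
  assert (H := alt4_even_le0 z n ltac:(split; lra)). lra.
Qed.

Lemma theta_leU z : 0 < z < 1 -> Elim z - Olim z <= 1 - 2 * z + 2 * z ^ 4.
Proof.
  intros Hz. apply (cv_le _ _ _ (cv_shift _ _ (theta_cv z Hz))). intros n.
  assert (H := alt4_even_le1 z n ltac:(split; lra)). lra.
Qed.

Lemma theta_le_uni z : 4/5 <= z < 1 -> Elim z - Olim z <= 13/20.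
Proof.
  intros Hz.
  assert (Hv : Un_cv (fun N => 13/20 + z ^ (2 * N * (2 * N))) (13/20)).
  { assert (H := CV_plus _ _ _ _ (cv_const (13/20))
        (cv_pow_sub z (fun N => (2 * N * (2 * N))%nat) ltac:(split; lra) ltac:(intros M; cbv beta; destruct M; [lia|]; assert (S M <= S M * S M)%nat by (apply Nat.le_mul_l; lia); nia))).
    rewrite Rplus_0_r in H. exact H. }
  apply (Rle_cv_lim (fun N => theta_partial_unimodal z N Hz) (theta_cv z ltac:(split; lra)) Hv).
Qed.

Lemma inv_small (e : R) : 0 <= e <= 1/18 -> / (1 - e ^ 8) <= 1001/1000.
Proof.
  intros He. assert (H8 : e ^ 8 <= (1/18) ^ 8) by (apply pow_incr; lra).
  assert (0 <= e ^ 8) by (apply pow_le; lra).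
  assert ((1/18)^8 <= 1/10000) by (simpl; lra).
  replace (1001/1000) with (/ (1000/1001)) by field.
  apply Rinv_le_contravar; lra.
Qed.

Lemma Phi_cv x y : 0 < x < 1 -> 0 < y < 1 ->
  Un_cv (fun N => (EN x N - ON x N) * (EN y N - ON y N) - 2 * ON x N * ON y N)
        ((Elim x - Olim x) * (Elim y - Olim y) - 2 * Olim x * Olim y).
Proof.
  intros Hx Hy.
  assert (A1 := EN_cv x ltac:(split; lra)). assert (A2 := ON_cv x ltac:(split; lra)).
  assert (A3 := EN_cv y ltac:(split; lra)). assert (A4 := ON_cv y ltac:(split; lra)).
  apply CV_minus.
  - apply CV_mult; apply CV_minus; auto.
  - apply CV_mult; auto. apply CV_mult; auto. apply cv_const.
Qed.

Lemma main_ge1 r s : 1 <= r -> 1 <= s -> Fr r s <= Fr r 1.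
Proof.
  intros Hr Hs. unfold Fr.
  assert (Hrs : 0 < r * s) by nra. assert (Hrs' : 0 < r / s) by (apply Rdiv_lt_0_compat; lra).
  replace (r * 1) with r by ring. replace (r / 1) with r by field.
  rewrite !theta4_eq, !thetao_eq by lra.
  assert (HPI : 3 < PI) by (assert (H := PI2_3_2); lra).
  set (al := PI * (r * s)). set (be := PI * (r / s)). set (R := PI * r).
  assert (Ex : X (r * s) = exp (- al)) by (unfold X, al; f_equal; ring).
  assert (Ey : X (r / s) = exp (- be)) by (unfold X, be; f_equal; ring).
  assert (Ee : X r = exp (- R)) by (unfold X, R; f_equal; ring).
  rewrite Ex, Ey, Ee.
  assert (Hab : al * be = R * R) by (unfold al, be, R; field; lra).
  assert (HbR : be <= R).
  { unfold be, R. apply Rmult_le_compat_l; [lra|]. unfold Rdiv.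
    assert (/ s <= 1) by (replace 1 with (/1) by field; apply Rinv_le_contravar; lra). nra. }
  assert (HRa : R <= al) by (unfold al, R; apply Rmult_le_compat_l; nra).
  assert (Hbe0 : 0 < be) by (unfold be; apply Rmult_lt_0_compat; lra).
  assert (HR3 : 3 <= R) by (unfold R; nra).
  assert (He18 : exp (- R) <= 1/18).
  { rewrite exp_Ropp. assert (exp 3 <= exp R) by (apply exp_le; lra). assert (H3e := exp3_ge).
    replace (1/18) with (/ 18) by field. apply Rinv_le_contravar; lra. }
  set (x := exp (- al)) in *. set (y := exp (- be)) in *. set (e := exp (- R)) in *.
  assert (Hx : 0 < x < 1) by (rewrite <- Ex; apply X_range; auto).
  assert (Hy : 0 < y < 1) by (rewrite <- Ey; apply X_range; auto).
  assert (He : 0 < e < 1) by (rewrite <- Ee; apply X_range; lra).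
  assert (Hxe : x <= e) by (unfold x, e; apply exp_le; lra).
  destruct (Rle_lt_dec (R - be) 1) as [HB|HA].
  -
    destruct (regionB_exp al be R Hbe0 HbR HRa Hab HB ltac:(lra) He18) as [H1 [H2 [H3 [H4 [H5 H6]]]]].
    fold x y e in H1, H2, H3, H4, H5, H6.
    apply (Rle_cv_lim (Un := fun N => (EN x N - ON x N) * (EN y N - ON y N) - 2 * ON x N * ON y N)
                      (Vn := fun N => (EN e N - ON e N) * (EN e N - ON e N) - 2 * ON e N * ON e N)).
    + intros N. apply regionB_N; lra.
    + apply Phi_cv; auto.
    + apply Phi_cv; auto.
  -
    assert (Hy25 : 5/2 * e <= y).
    { unfold y, e. replace (- be) with (- R + (R - be)) by ring. rewrite exp_plus.
      assert (exp 1 <= exp (R - be)) by (apply exp_le; lra). assert (H1e := exp1_ge).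
      assert (0 < exp (- R)) by apply exp_pos. nra. }
    destruct (Elim_bounds x Hx) as [Ex1 Ex2]. destruct (Olim_bounds x Hx) as [Ox1 Ox2].
    destruct (Elim_bounds y Hy) as [Ey1 Ey2]. destruct (Olim_bounds y Hy) as [Oy1 Oy2].
    destruct (Elim_bounds e He) as [Ee1 Ee2]. destruct (Olim_bounds e He) as [Oe1 Oe2].
    assert (Hinv := inv_small e ltac:(split; lra)).
    assert (Hinvx : / (1 - x ^ 8) <= 1001/1000) by (apply inv_small; split; lra).
    assert (Hx4 : x ^ 4 <= e ^ 4) by (apply pow_incr; lra).
    assert (He4 : e ^ 4 <= e * (1/18) ^ 3).
    { replace (e ^ 4) with (e * (e * e * e)) by ring. apply Rmult_le_compat_l; [lra|].
      simpl. assert (e * e <= (1/18) * (1/18)) by nra. nra. }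
    set (Exl := Elim x) in *. set (Oxl := Olim x) in *. set (Eyl := Elim y) in *.
    set (Oyl := Olim y) in *. set (Eel := Elim e) in *. set (Oel := Olim e) in *.
    assert (HEx : Exl <= 1 + 3 * e ^ 4).
    { assert (0 <= x ^ 4) by (apply pow_le; lra).
      assert (x ^ 4 * / (1 - x ^ 8) <= e ^ 4 * (1001/1000)).
      { apply Rmult_le_compat; auto. left; apply Rinv_0_lt_compat.
        assert (x ^ 8 < 1) by (apply pow_lt_1_compat; [split; lra| lia]). lra. }
      lra. }
    assert (HOe : Oel <= 2 * e * (1001/1000)).
    { rewrite pow_1 in Oe2. assert (e * / (1 - e ^ 8) <= e * (1001/1000)) by (apply Rmult_le_compat_l; lra).
      lra. }
    assert (HF1 : 1 - 2 * (2 * e * (1001/1000)) - (2 * e * (1001/1000)) * (2 * e * (1001/1000)) <=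
                  (Eel - Oel) * (Eel - Oel) - 2 * Oel * Oel).
    { assert (1 - Oel <= Eel - Oel) by lra. assert (0 <= 1 - Oel) by lra. nra. }
    assert (HFs : (Exl - Oxl) * (Eyl - Oyl) - 2 * Oxl * Oyl <= Exl * (Eyl - Oyl)).
    { assert (0 <= Oxl * (Eyl + Oyl)) by (apply Rmult_le_pos; lra). nra. }
    assert (Hth : exists V, Eyl - Oyl <= V /\ 0 <= V /\ (1 + 3 * e ^ 4) * V <=
                1 - 2 * (2 * e * (1001/1000)) - (2 * e * (1001/1000)) * (2 * e * (1001/1000))).
    { destruct (Rle_lt_dec y (1/5)) as [Y1|Y1]; [|destruct (Rle_lt_dec y (4/5)) as [Y2|Y2]].
      - exists (1 - 496/100 * e). split; [|split].
        + assert (H := theta_leU y Hy). fold Eyl Oyl in H.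
          assert (y ^ 4 <= y * (1/125)).
          { replace (y ^ 4) with (y * (y * y * y)) by ring. apply Rmult_le_compat_l; [lra|].
            assert (y * y <= 1/25) by nra. nra. }
          lra.
        + lra.
        + assert (0 <= e ^ 4) by (apply pow_le; lra). nra.
      - exists (61/100). split; [|split].
        + assert (H := theta_leU y Hy). fold Eyl Oyl in H.
          assert (y ^ 4 <= 16/10000 + 68/100 * (y - 1/5)).
          { assert ((y - 1/5) * (y - 4/5) * (y * y + y + 84/100) <= 0).
            { assert (0 <= y * y + y + 84/100) by nra. assert ((y - 1/5) * (y - 4/5) <= 0) by nra. nra. }
            simpl. nra. }
          lra.
        + lra.
        + assert (0 <= e ^ 4) by (apply pow_le; lra). nra.
      - exists (13/20). split; [|split].
        + assert (H := theta_le_uni y ltac:(split; lra)). fold Eyl Oyl in H. lra.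
        + lra.
        + assert (0 <= e ^ 4) by (apply pow_le; lra). nra. }
    destruct Hth as [V [HV1 [HV2 HV3]]].
    assert (Exl * (Eyl - Oyl) <= Exl * V) by (apply Rmult_le_compat_l; lra).
    assert (Exl * V <= (1 + 3 * e ^ 4) * V) by (apply Rmult_le_compat_r; lra).
    lra.
Qed.


Lemma Fr_sym r s : 0 < s -> Fr r s = Fr r (/ s).
Proof.
  intros Hs. unfold Fr.
  replace (r * / s) with (r / s) by (unfold Rdiv; ring).
  replace (r / / s) with (r * s) by (field; lra). ring.
Qed.

Theorem theorem6 (r : R) (hr : 1 <= r) :
  forall s : R, 0 < s -> Fr r s <= Fr r 1.
Proof.
  intros s Hs. destruct (Rle_lt_dec 1 s) as [H|H].
  - apply main_ge1; auto.
  - rewrite (Fr_sym r s Hs). apply main_ge1; auto.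
    replace 1 with (/ 1) by field. apply Rinv_le_contravar; lra.
Qed.
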